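(* Let $S$ be a finite set of points in $\mathbb{R}^k$ with the Euclidean metric $d$, and let $(S_i,p_i,q_i,d_i)_{1\le i\le L}$ be a grid-based sparse partition of $S$ with grid box side lengths $g_i=d_i/(6k)$. Let $j=L-\lceil\log_3(2\sqrt{k})\rceil$ and assume $j\ge 1$. Then for any two distinct points $a,b\in S\setminus S_j$, $\delta(S)<d(a,b)$.
   Context: $d(x,T)=\min\{d(x,y):y\in T\setminus\{x\}\}$ and $\delta(S)=\min\{d(p,q):p,q\in S,p\ne q\}$. Grid-based sparse partition of $S$: levels $i=1,\dots,L$ with $S_1=S$; pivot $p_i$ chosen from $S_i$, $q_i$ a nearest neighbor of $p_i$ in $S_i$, $d_i=d(p_i,q_i)$; $G_i$ is the axis-aligned grid with boxes of side length $g_i=d_i/(6k)$; a point $x\in S_i$ is sparse at level $i$ if no other point of $S_i$ lies in the $3^k$ boxes of $G_i$ formed by the box containing $x$ and its bordering boxes; $S_i'$ is the set of sparse points of $S_i$; $S_{i+1}=S_i\setminus S_i'$; $S_{L+1}=\emptyset$. *)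

(* Defs.v *)
From HB Require Import structures.
From mathcomp Require Import all_boot all_order all_algebra.
From mathcomp Require Import all_classical all_reals all_analysis.
Set Implicit Arguments. Unset Strict Implicit. Unset Printing Implicit Defensive.
Import Order.TTheory GRing.Theory Num.Theory.
Local Open Scope classical_set_scope.
Local Open Scope ring_scope.

(* Points of R^k are row vectors 'rV[R]_k; coordinate t of x is x ord0 t. *)

Definition eucl_dist (R : realType) (k : nat) (x y : 'rV[R]_k) : R :=
  Num.sqrt (\sum_(t < k) (x ord0 t - y ord0 t) ^+ 2).

(* delta(S) = min { d(p,q) : p,q in S, p <> q } (a minimum, since S is finite). *)
Definition delta (R : realType) (k : nat) (S : set 'rV[R]_k) : R :=
  inf [set r | exists p q, [/\ S p, S q, p <> q & r = eucl_dist p q]].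

(* Index (along coordinate t) of the box of the grid with side g containing x;
   the grid is anchored at the origin, boxes are [m g, (m+1) g). *)
Definition box_index (R : realType) (k : nat) (g : R) (x : 'rV[R]_k) (t : 'I_k) : int :=
  Num.floor (x ord0 t / g).

(* y lies in the box of x or in one of its bordering boxes (3^k boxes in all). *)
Definition in_nbhd_boxes (R : realType) (k : nat) (g : R) (x y : 'rV[R]_k) : Prop :=
  forall t : 'I_k, `|box_index g y t - box_index g x t| <= 1.

Definition sparse (R : realType) (k : nat) (T : set 'rV[R]_k) (g : R) (x : 'rV[R]_k) : Prop :=
  forall y, T y -> y <> x -> ~ in_nbhd_boxes g x y.

Definition grid_sparse_partition (R : realType) (k : nat) (S : set 'rV[R]_k)
  (L : nat) (Ss : nat -> set 'rV[R]_k) (p q : nat -> 'rV[R]_k) : Prop :=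
  [/\ Ss 1%N = S,
      (forall i, (1 <= i <= L)%N ->
         [/\ Ss i (p i), Ss i (q i), q i <> p i &
             (forall y, Ss i y -> y <> p i -> eucl_dist (p i) (q i) <= eucl_dist (p i) y)]),
      (forall i, (1 <= i <= L)%N -> forall x,
         Ss i.+1 x <-> (Ss i x /\ ~ sparse (Ss i) (eucl_dist (p i) (q i) / (6 * k%:R)) x))
    & Ss L.+1 = set0].

(* Main.v *)
Require Import Defs.
From HB Require Import structures.
From mathcomp Require Import all_boot all_order all_algebra.
From mathcomp Require Import all_classical all_reals all_analysis.
From mathcomp Require Import zify ring lra.
Import Order.TTheory GRing.Theory Num.Theory.
Local Open Scope classical_set_scope.
Local Open Scope ring_scope.
Set Implicit Arguments. Unset Strict Implicit.

Definition sqd (R : realType) (k : nat) (x y : 'rV[R]_k) : R :=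
  \sum_(t < k) (x ord0 t - y ord0 t) ^+ 2.

Lemma sqd_ge0 (R : realType) (k : nat) (x y : 'rV[R]_k) : 0 <= sqd x y.
Proof. by apply: sumr_ge0 => t _; exact: sqr_ge0. Qed.

Lemma coord_le_sqd (R : realType) (k : nat) (x y : 'rV[R]_k) t :
  (x ord0 t - y ord0 t) ^+ 2 <= sqd x y.
Proof.
rewrite /sqd (bigD1 t) //= lerDl; apply: sumr_ge0 => s _; exact: sqr_ge0.
Qed.

Lemma sqd_sym (R : realType) (k : nat) (x y : 'rV[R]_k) : sqd x y = sqd y x.
Proof. by apply: eq_bigr => t _; rewrite -sqrrN opprB. Qed.

Lemma sqd_gt0 (R : realType) (k : nat) (x y : 'rV[R]_k) : x <> y -> 0 < sqd x y.
Proof.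
move=> xy; rewrite lt_def sqd_ge0 andbT; apply/eqP => /psumr_eq0P H.
apply: xy; apply/rowP => t; apply/eqP; rewrite -subr_eq0 -sqrf_eq0; apply/eqP.
by rewrite H // => s _; exact: sqr_ge0.
Qed.

Lemma nbhd_of_close (R : realType) (k : nat) (g : R) (x y : 'rV[R]_k) :
  0 < g -> sqd x y < g ^+ 2 -> in_nbhd_boxes g x y.
Proof.
move=> g0 hs t; have := coord_le_sqd x y t => hc.
set a := x ord0 t - y ord0 t.
have haa : a * a < g * g by rewrite -!expr2; exact: le_lt_trans hs.
have h1 : a < g by clear -haa g0; nra.
have h2 : - g < a by clear -haa g0; nra.
rewrite /box_index ler_norml.
have fx1 := floor_le (x ord0 t / g); have fx2 := floorD1_gt (x ord0 t / g).
have fy1 := floor_le (y ord0 t / g); have fy2 := floorD1_gt (y ord0 t / g).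
have e1 : y ord0 t / g < x ord0 t / g + 1.
  by rewrite -ltrBlDl -mulrBl ltr_pdivrMr // mul1r; rewrite /a in h2; lra.
have e2 : x ord0 t / g < y ord0 t / g + 1.
  by rewrite -ltrBlDl -mulrBl ltr_pdivrMr // mul1r; rewrite /a in h1; lra.
set fx := Num.floor (x ord0 t / g) in fx1 fx2 *.
set fy := Num.floor (y ord0 t / g) in fy1 fy2 *.
have i1 : (fy%:~R : R) < (fx + 2)%:~R by rewrite intrD; rewrite intrD in fx2 fy2; lra.
have i2 : (fx%:~R : R) < (fy + 2)%:~R by rewrite intrD; rewrite intrD in fx2 fy2; lra.
rewrite ltr_int in i1; rewrite ltr_int in i2.
apply/andP; split; lia.
Qed.

Lemma close_of_nbhd (R : realType) (k : nat) (g : R) (x y : 'rV[R]_k) :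
  (0 < k)%N -> 0 < g -> in_nbhd_boxes g x y -> sqd x y < 4 * g ^+ 2 * k%:R.
Proof.
move=> k0 g0 hn.
have hc : forall t, (x ord0 t - y ord0 t) ^+ 2 < 4 * g ^+ 2.
  move=> t; have := hn t; rewrite /box_index ler_norml => /andP[j1 j2].
  have fx1 := floor_le (x ord0 t / g); have fx2 := floorD1_gt (x ord0 t / g).
  have fy1 := floor_le (y ord0 t / g); have fy2 := floorD1_gt (y ord0 t / g).
  set fx := Num.floor (x ord0 t / g) in fx1 fx2 j1 j2.
  set fy := Num.floor (y ord0 t / g) in fy1 fy2 j1 j2.
  have k1 : fy <= fx + 1 by lia.
  have k2 : fx <= fy + 1 by lia.
  rewrite -(ler_int R) intrD in k1; rewrite -(ler_int R) intrD in k2.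
  rewrite intrD in fx2 fy2.
  have e1 : y ord0 t / g - x ord0 t / g < 2 by lra.
  have e2 : x ord0 t / g - y ord0 t / g < 2 by lra.
  rewrite -mulrBl ltr_pdivrMr // in e1; rewrite -mulrBl ltr_pdivrMr // in e2.
  nra.
rewrite /sqd; apply: (@lt_le_trans _ _ (\sum_(t < k) (4 * g ^+ 2))).
  apply: ltr_sum => //; apply/hasP; exists (Ordinal k0) => //; exact: mem_index_enum.
by rewrite sumr_const card_ord mulr_natr.
Qed.

Lemma find_step (P : nat -> Prop) m n : (m < n)%N -> P m -> ~ P n ->
  exists i, [/\ (m <= i < n)%N, P i & ~ P i.+1].
Proof.
elim: n => // n IH; rewrite ltnS leq_eqVlt => /orP[/eqP <- | mn] Pm nP.
  by exists m; rewrite leqnn ltnSn.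
case: (pselect (P n)) => Pn.
  by exists n; rewrite ltnSn (ltnW mn).
have [i [/andP[h1 h2] Pi nPi]] := IH mn Pm Pn.
by exists i; rewrite h1 (ltn_trans h2 (ltnSn n)).
Qed.

Lemma eucl_sqd (R : realType) (k : nat) (x y : 'rV[R]_k) :
  eucl_dist x y = Num.sqrt (sqd x y).
Proof. by []. Qed.

Unset Implicit Arguments.

Theorem lemma6p1 (R : realType) (k : nat) (S : set 'rV[R]_k) (L : nat)
  (Ss : nat -> set 'rV[R]_k) (p q : nat -> 'rV[R]_k) (j : nat) :
  finite_set S ->
  grid_sparse_partition S L Ss p q ->
  (j%:Z = L%:Z - Num.ceil (ln (2 * Num.sqrt (k%:R)) / ln 3 : R)) ->
  (1 <= j)%N ->
  forall a b : 'rV[R]_k, S a -> ~ (Ss j a) -> S b -> ~ (Ss j b) -> a <> b ->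
  delta S < eucl_dist a b.
Proof.
move=> _ [H1 Hpq Hst HL] Hj j1 a b Sa naj Sb nbj ab.
have k0 : (0 < k)%N.
  rewrite lt0n; apply/negP => /eqP k_eq; apply: ab; apply/rowP => -[m hm].
  by exfalso; rewrite k_eq in hm.
have kR1 : 1 <= (k%:R : R) by rewrite ler1n.
have c1 : (0 < Num.ceil (ln (2 * Num.sqrt (k%:R)) / ln 3 : R)).
  have hs : 1 <= Num.sqrt (k%:R : R) by rewrite -{1}sqrtr1 ler_sqrt //; lra.
  rewrite ceil_gt0; apply: divr_gt0; apply: ln_gt0; lra.
have jL : (j.+1 <= L)%N.
  move: c1 Hj; set c := Num.ceil _ => c1 Hj; lia.
have Sub : forall i, (1 <= i <= L.+1)%N -> Ss i `<=` S.
  elim=> // i IH /andP[_ hi] x.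
  case: i IH hi => [|i] IH hi; first by rewrite H1.
  move=> /(Hst i.+1 _) []; first by [].
  move=> Sx _; apply: IH => //; exact: ltnW.
pose E i := sqd (p i) (q i).
have Epos : forall i, (1 <= i <= L)%N -> 0 < E i.
  move=> i hi; have [_ _ qp _] := Hpq i hi; apply: sqd_gt0 => pq; exact: qp.
have Step : forall i, (1 <= i)%N -> (i < L)%N -> 9 * k%:R * E i.+1 < E i.
  move=> i i1 iL.
  have hi : (1 <= i <= L)%N by rewrite i1 ltnW.
  have hi1 : (1 <= i.+1 <= L)%N by rewrite iL.
  set g := eucl_dist (p i) (q i) / (6 * k%:R).
  have g0 : 0 < g.
    by apply: divr_gt0; [rewrite eucl_sqd sqrtr_gt0; exact: Epos | lra].
  have [Pp _ _ NN] := Hpq i.+1 hi1.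
  have [Ppi nsp] := (Hst i hi (p i.+1)).1 Pp.
  have [y [Sy yp nb]] : exists y, [/\ Ss i y, y <> p i.+1 & in_nbhd_boxes g (p i.+1) y].
    case: (pselect (exists y, [/\ Ss i y, y <> p i.+1 & in_nbhd_boxes g (p i.+1) y])) => // hne.
    exfalso; apply: nsp => y Sy yp nb; apply: hne; by exists y.
  have Sy1 : Ss i.+1 y.
    apply/(Hst i hi y); split => // sp; apply: (sp (p i.+1)) => //.
      by move=> e; apply: yp.
    move=> t; rewrite /box_index distrC; exact: nb t.
  have h1 : E i.+1 <= sqd (p i.+1) y.
    by have := NN y Sy1 yp; rewrite !eucl_sqd ler_sqrt // sqd_ge0.
  have h2 := close_of_nbhd k0 g0 nb.
  have h3 : 9 * k%:R * (4 * g ^+ 2 * k%:R) = E i.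
    rewrite /g eucl_sqd expr_div_n sqr_sqrtr; last exact: sqd_ge0.
    rewrite -/(E i); move: (E i) => e; clear -kR1; field; lra.
  rewrite -h3; have : 0 < 9 * (k%:R : R) by lra.
  move: (E i.+1) h1 h2 => e h1 h2 h9; nra.
have Mono : forall i n, (1 <= i)%N -> (i <= n <= L)%N -> E n <= E i.
  move=> i; elim=> [|n IH] i1 /andP[h1 h2]; first by exfalso; lia.
  case: (ltngtP i n.+1) h1 => // [lt _|-> _]; last by [].
  apply: le_trans (IH i1 _); last by rewrite -ltnS lt ltnW.
  have := Step n (leq_trans i1 lt) h2.
  have := Epos n.+1; rewrite h2 (leq_trans i1 (ltnW lt)) => /(_ isT) hp.
  have : 0 <= E n.+1 by exact: ltW.
  move=> ? ?; nra.
have key : forall a b i, (1 <= i)%N -> (i.+2 <= L)%N -> Ss i a -> Ss i b ->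
    ~ Ss i.+1 a -> a <> b -> delta S < eucl_dist a b.
  move=> a' b' i i1 iL Sa' Sb' na' ab'.
  have hi : (1 <= i <= L)%N by rewrite i1 (leq_trans _ iL) // ltnW.
  set g := eucl_dist (p i) (q i) / (6 * k%:R).
  have g0 : 0 < g.
    by apply: divr_gt0; [rewrite eucl_sqd sqrtr_gt0; exact: Epos | lra].
  have sp : sparse (Ss i) g a'.
    case: (pselect (sparse (Ss i) g a')) => // nsp; exfalso; apply: na'.
    by apply/(Hst i hi a').
  have nb := sp b' Sb' (fun e => ab' (esym e)).
  have hab : g ^+ 2 <= sqd a' b'.
    rewrite leNgt; apply/negP => lt; apply: nb.
    move=> t; rewrite distrC; apply: (nbhd_of_close g0 _ t); by rewrite sqd_sym.
  have gab : g <= eucl_dist a' b'.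
    by rewrite eucl_sqd -(ger0_norm (ltW g0)) -sqrtr_sqr ler_sqrt // sqd_ge0.
  apply: lt_le_trans gab.
  have hL : (1 <= L <= L)%N by rewrite leqnn (leq_trans _ iL).
  have dL : delta S <= eucl_dist (p L) (q L).
    apply: ge_inf.
      exists 0 => r [p' [q' [_ _ _ ->]]]; exact: sqrtr_ge0.
    have [PL QL qp _] := Hpq L hL.
    exists (p L), (q L); split => //.
    - by apply: (Sub L _ _ PL); rewrite leqnSn andbT (leq_trans _ iL).
    - by apply: (Sub L _ _ QL); rewrite leqnSn andbT (leq_trans _ iL).
    - by move=> e; apply: qp.
  apply: le_lt_trans dL _.
  have s1 := Step i i1 (ltnW iL).
  have s2 := Step i.+1 isT iL.
  have m := Mono i.+2 L isT (introT andP (conj iL (leqnn L))).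
  have e2 : 0 <= E i.+2 by apply: ltW; apply: Epos; rewrite iL.
  have h3 : g ^+ 2 * (36 * k%:R ^+ 2) = E i.
    rewrite /g eucl_sqd expr_div_n sqr_sqrtr; last exact: sqd_ge0.
    rewrite -/(E i); move: (E i) => e; clear -kR1; field; lra.
  have hg : E L < g ^+ 2.
    move: (E i) (E i.+1) (E i.+2) (E L) (g ^+ 2) s1 s2 m e2 h3 => E0 E1 E2 EL G s1 s2 m e2 h3.
    move: (k%:R : R) kR1 s1 s2 h3 => K K1 s1 s2 h3; clear -K1 s1 s2 h3 m e2.
    have K9 : 0 < 9 * K by lra.
    have t1 : 9 * K * (9 * K * E2) < 9 * K * E1 by rewrite ltr_pM2l.
    have t2 : (36 * K ^+ 2) * E2 < (36 * K ^+ 2) * G.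
      have u1 : 0 <= 45 * K ^+ 2 * E2 by rewrite mulr_ge0 // mulr_ge0 // sqr_ge0.
      have u2 : (36 * K ^+ 2) * E2 + 45 * K ^+ 2 * E2 = 9 * K * (9 * K * E2) by ring.
      have u3 : (36 * K ^+ 2) * G = G * (36 * K ^+ 2) by ring.
      lra.
    have K4 : 0 < 36 * K ^+ 2 by rewrite mulr_gt0 // exprn_gt0 //; lra.
    rewrite ltr_pM2l // in t2; lra.
  rewrite eucl_sqd -(ger0_norm (ltW g0)) -sqrtr_sqr ltr_sqrt //.
  by rewrite exprn_gt0.
have j2 : (1 < j)%N.
  rewrite ltn_neqAle j1 andbT; apply/eqP => e; apply: naj; by rewrite -e H1.
have P1 : Ss 1%N a /\ Ss 1%N b by rewrite H1.
have [i [/andP[i1 ij] [Sai Sbi] nab]] :=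
  @find_step (fun i => Ss i a /\ Ss i b) 1 j j2 P1 (fun x => naj (proj1 x)).
have iL : (i.+2 <= L)%N by apply: leq_trans jL.
case: (pselect (Ss i.+1 a)) => ha.
  have hb : ~ Ss i.+1 b by move=> hb; apply: nab.
  rewrite eucl_sqd sqd_sym -eucl_sqd.
  by apply: (key b a i) => // e; apply: ab.
exact: (key a b i).
Qed.
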